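(* Let $\beta$ be a braid on $b$ strands, let $2\le a<b$, let $1\le i\le b-a+1$, and let $$\alpha^{\pm}=(\sigma_i^{\pm1}\sigma_{i+1}^{\pm1}\cdots\sigma_{i+a-2}^{\pm1})^{a}$$ (a positive, respectively negative, full twist on the $a$ strands in positions $i,\dots,i+a-1$). For $m\ge 1$ let $L^m_{\pm}$ denote the transverse link given by the closure of $\beta(\alpha^{\pm})^m$. Then (for each choice of sign) there is some $N$ such that for all $m>N$, $\psi(L^m_{\pm})=0$ if and only if $\psi(L^{m+1}_{\pm})=0$. Similarly, for all such $m$, $\psi'(L^m_{\pm})=0$ if and only if $\psi'(L^{m+1}_{\pm})=0$.
   Context: $B_b$ is the Artin braid group with standard generators $\sigma_1,\dots,\sigma_{b-1}$; closures of braids are transverse links in the standard contact $S^3$. Khovanov complex conventions: for an oriented diagram with $n_\pm$ positive/negative crossings, generators are Kauffman states (a $0$- or $1$-resolution at each crossing) with each resulting circle labelled $v_+$ or $v_-$; homological grading $i=r-n_-$ ($r$ = number of $1$-resolutions), quantum grading $j=p+i+n_+-n_-$ where $p$ = (number of $v_+$) − (number of $v_-$); the differential uses the standard merge/split maps. $\psi(\hat\beta)$ (Plamenevskaya's invariant) is the Khovanov homology class of the generator labelling every circle $v_-$ in the oriented resolution of the closed braid diagram (the $0$-resolution at positive crossings, the $1$-resolution at negative crossings). $\psi'$ is the analogous class in reduced Khovanov homology over $\mathbb{Z}/2\mathbb{Z}$ (quotient by generators with $v_-$ on the circle through a marked point), given by labelling the marked circle $v_+$ and all other circles $v_-$ in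 the oriented resolution. *)

(* Defs.v *)
From mathcomp Require Import all_boot all_order all_algebra.
Set Implicit Arguments. Unset Strict Implicit. Unset Printing Implicit Defensive.
Import GRing.Theory Num.Theory.
Local Open Scope ring_scope.

(* A braid word: a sequence of letters (k, eps) standing for sigma_k^{+1}
   if eps = true and sigma_k^{-1} if eps = false (k is 1-based). *)
Definition braid_word := seq (nat * bool).

Definition wf_word (b : nat) (w : braid_word) : bool :=
  all (fun l => (0 < l.1)%N && (l.1 < b)%N) w.

Definition letter (w : braid_word) (t : nat) : nat * bool := nth (0%N, true) w t.

Definition full_twist (a i : nat) (e : bool) : braid_word :=
  flatten (nseq a [seq (j, e) | j <- iota i a.-1]).

Definition twisted (beta : braid_word) (a i : nat) (e : bool) (m : nat) : braid_word :=
  beta ++ flatten (nseq m (full_twist a i e)).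

Definition nneg (w : braid_word) : nat := count (fun l => ~~ l.2) w.

(* Kauffman states: a 0/1 choice at each crossing (true = 1-resolution). *)
Definition state (w : braid_word) := {ffun 'I_(size w) -> bool}.

Definition st (w : braid_word) (s : state w) (t : nat) : bool :=
  if insub t is Some c then s c else false.

(* The resolution at crossing t is the vertical (= oriented) smoothing iff it is
   the 0-resolution of a positive crossing or the 1-resolution of a negative one. *)
Definition vert (w : braid_word) (s : state w) (t : nat) : bool :=
  st s t == ~~ (letter w t).2.

(* Arcs of the closed braid diagram: node (t, p), 0 <= t <= size w, p < b, is the
   piece of the strand in position p (0-based) between crossing t-1 and crossing t;
   level size w is glued to level 0 by the braid closure.  Crossing t involving
   sigma_k acts on positions k-1 and k. *)
Definition bedge (w : braid_word) (s : state w) (u v : nat * nat) : bool :=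
  let: (t, p) := u in let: (t', q) := v in
  [|| (t == size w) && (t' == 0%N) && (p == q),
      [&& (t < size w)%N, t' == t.+1, p == q &
          ((p != (letter w t).1.-1) && (p != (letter w t).1)) || vert s t],
      [&& (t < size w)%N, t' == t, p == (letter w t).1.-1, q == (letter w t).1
          & ~~ vert s t] |
      [&& (0 < t)%N, (t.-1 < size w)%N, t' == t, p == (letter w t.-1).1.-1,
          q == (letter w t.-1).1 & ~~ vert s t.-1] ].

Definition node (b : nat) (w : braid_word) := ('I_(size w).+1 * 'I_b)%type.

Definition nval (b : nat) (w : braid_word) (z : node b w) : nat * nat :=
  (nat_of_ord z.1, nat_of_ord z.2).

Definition edge (b : nat) (w : braid_word) (s : state w) : rel (node b w) :=
  fun u v => bedge s (nval u) (nval v) || bedge s (nval v) (nval u).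

Definition same_circle (b : nat) (w : braid_word) (s : state w) : rel (node b w) :=
  connect (@edge b w s).

(* generators: a state together with a labelling of arcs constant on circles
   (true = v_+, false = v_-) *)
Definition gen (b : nat) (w : braid_word) :=
  (state w * {ffun node b w -> bool})%type.

Definition valid (b : nat) (w : braid_word) (x : gen b w) : bool :=
  [forall u, forall v, same_circle x.1 u v ==> (x.2 u == x.2 v)].

Definition rdeg (b : nat) (w : braid_word) (x : gen b w) : nat := #|[set c | x.1 c]|.

Definition in_circ (b : nat) (w : braid_word) (s : state w) (P : pred (node b w))
  (z : node b w) : bool := [exists u, P u && same_circle s u z].
Definition lab (b : nat) (w : braid_word) (f : {ffun node b w -> bool})
  (P : pred (node b w)) : bool := [exists u, P u && f u].

(* the arcs (c, k-1) and (c+1, k) at crossing c = sigma_k: the (at most two)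
   circles meeting the crossing are the circles through these two arcs *)
Definition arcU (b : nat) (w : braid_word) (c : nat) : pred (node b w) :=
  fun z => (nval z == (c, (letter w c).1.-1)).
Definition arcV (b : nat) (w : braid_word) (c : nat) : pred (node b w) :=
  fun z => (nval z == (c.+1, (letter w c).1)).

(* m(v+ (x) v+) = v+, m(v+ (x) v-) = m(v- (x) v+) = v-, m(v- (x) v-) = 0 *)
Definition merge_coef (l1 l2 out : bool) : bool :=
  if l1 && l2 then out else if l1 || l2 then ~~ out else false.
(* Delta(v+) = v+ (x) v- + v- (x) v+,  Delta(v-) = v- (x) v- *)
Definition split_coef (l o1 o2 : bool) : bool :=
  if l then o1 != o2 else ~~ o1 && ~~ o2.

Definition local_coef (b : nat) (w : braid_word) (c : nat) (x y : gen b w) : bool :=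
  let U := @arcU b w c in let V := @arcV b w c in
  let conn (s : state w) := [exists u, exists v, [&& U u, V v & same_circle s u v]] in
  let agree := [forall z, (~~ in_circ x.1 U z && ~~ in_circ x.1 V z) ==> (x.2 z == y.2 z)] in
  if ~~ conn x.1 && conn y.1 then
    agree && merge_coef (lab x.2 U) (lab x.2 V) (lab y.2 U)
  else if conn x.1 && ~~ conn y.1 then
    agree && split_coef (lab x.2 U) (lab y.2 U) (lab y.2 V)
  else false.

(* the matrix of the Khovanov differential: coefficient of y in d x *)
Definition kh_d (b : nat) (w : braid_word) (x y : gen b w) : int :=
  if valid x && valid y then
    \sum_(c : 'I_(size w) | ~~ x.1 c &&
            (y.1 == [ffun j => if j == c then true else x.1 j]))
       (-1) ^+ #|[set j : 'I_(size w) | (j < c)%N && x.1 j]| * (local_coef (val c) x y)%:Z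
  else 0.

Definition or_state (w : braid_word) : state w := [ffun c => ~~ (letter w (val c)).2].

Definition psi_gen (b : nat) (w : braid_word) : gen b w := (or_state w, [ffun _ => false]).

(* psi(w) = 0 in Kh(closure of w; Z): psi_gen is the image under d of an integral
   chain of homological degree -1 (i.e. r = n_- - 1) *)
Definition psi_vanishes (b : nat) (w : braid_word) : Prop :=
  exists cf : {ffun gen b w -> int},
    (forall x, cf x != 0 -> valid x && ((rdeg x).+1 == nneg w)) /\
    (forall y, \sum_x cf x * kh_d x y = (y == psi_gen b w)%:Z).

Definition marked (b : nat) (w : braid_word) (p : nat) : pred (node b w) :=
  fun z => nval z == (0%N, p).

Definition psi'_gen (b : nat) (w : braid_word) (p : nat) : gen b w :=
  (or_state w, [ffun z => in_circ (or_state w) (@marked b w p) z]).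

(* psi'(w) = 0 in reduced Khovanov homology over Z/2 (quotient complex by the
   generators with v_- on the marked circle): psi'_gen is, modulo that subcomplex,
   the differential of a Z/2-chain of degree -1 spanned by generators with v_+ on
   the marked circle *)
Definition psi'_vanishes (b : nat) (w : braid_word) (p : nat) : Prop :=
  exists cf : {ffun gen b w -> 'F_2},
    (forall x, cf x != 0 ->
       [&& valid x, (rdeg x).+1 == nneg w & lab x.2 (@marked b w p)]) /\
    (forall y, valid y -> lab y.2 (@marked b w p) ->
       \sum_x cf x * (kh_d x y)%:~R = (y == psi'_gen b w p)%:R).

(* Main.v *)
Require Import Defs.
From mathcomp Require Import all_boot all_order all_algebra.
From mathcomp Require Import zify.
Set Implicit Arguments. Unset Strict Implicit. Unset Printing Implicit Defensive.
Import GRing.Theory Num.Theory.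

Lemma connect_map (T U : finType) (e : rel T) (e' : rel U) (f : T -> U) :
  (forall x y, e x y -> connect e' (f x) (f y)) ->
  forall x y, connect e x y -> connect e' (f x) (f y).
Proof.
move=> H x y /connectP [p pth ->]; elim: p x pth => [|z p IH] x /=.
  by rewrite connect0.
by case/andP=> exz pz; apply: connect_trans (H _ _ exz) (IH _ pz).
Qed.

Lemma edge_sym b w (s : state w) : symmetric (@edge b w s).
Proof. by move=> u v; rewrite /edge orbC. Qed.

Lemma sc_sym b w (s : state w) u v : @same_circle b w s u v = same_circle s v u.
Proof. by rewrite /same_circle (sym_connect_sym (@edge_sym b w s)). Qed.

Lemma letter_rc w l t : (t < size w)%N -> letter (rcons w l) t = letter w t.
Proof. by move=> h; rewrite /letter nth_rcons h. Qed.

Lemma letter_rcn w l : letter (rcons w l) (size w) = l.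
Proof. by rewrite /letter nth_rcons ltnn eqxx. Qed.

Lemma stE w (s : state w) (c : 'I_(size w)) : st s c = s c.
Proof. by rewrite /st valK. Qed.

Lemma st_out w (s : state w) t : (size w <= t)%N -> st s t = false.
Proof. by move=> h; rewrite /st insubN // -leqNgt. Qed.

Definition up b w l (z : node b w) : node b (rcons w l) := (inord z.1, z.2).
Definition dn b w l (z : node b (rcons w l)) : node b w := (inord (minn z.1 (size w)), z.2).

Lemma nval_up b w l z : nval (@up b w l z) = nval z.
Proof.
rewrite /nval /up /= inordK //; case: z => [t p] /=.
by rewrite size_rcons; apply: leq_trans (ltn_ord t) _.
Qed.

Lemma nval_dn b w l z : nval (@dn b w l z) = (minn z.1 (size w), z.2 : nat).
Proof. by rewrite /nval /dn /= inordK // ltnS geq_minr. Qed.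

Lemma dn_up b w l z : @dn b w l (up l z) = z.
Proof.
case: z => [t p]; rewrite /dn /up /=; congr (_, _); apply: val_inj => /=.
have ht := ltn_ord t.
rewrite inordK ?size_rcons; last lia.
rewrite inordK; lia.
Qed.

Lemma up_dn b w l (z : node b (rcons w l)) : (z.1 <= size w)%N -> up l (@dn b w l z) = z.
Proof.
case: z => [t p] /= h; rewrite /dn /up /=; congr (_, _); apply: val_inj => /=.
rewrite (minn_idPl h) inordK ?ltnS // inordK //.
by apply: leq_trans h _; rewrite size_rcons.
Qed.

Lemma vert_rc w l (s : state w) (s' : state (rcons w l)) t :
  (forall t, (t < size w)%N -> st s' t = st s t) ->
  (t < size w)%N -> vert s' t = vert s t.
Proof. by move=> Hs ht; rewrite /vert Hs // letter_rc. Qed.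

Lemma vert_rcn w l (s' : state (rcons w l)) :
  st s' (size w) = ~~ l.2 -> vert s' (size w) = true.
Proof. by move=> Hn; rewrite /vert Hn letter_rcn eqxx. Qed.

Lemma bedge_dn w l (s : state w) (s' : state (rcons w l)) t p t' q :
  (forall t, (t < size w)%N -> st s' t = st s t) ->
  st s' (size w) = ~~ l.2 ->
  (t <= (size w).+1)%N -> (t' <= (size w).+1)%N -> bedge s' (t, p) (t', q) ->
  (minn t (size w), p) = (minn t' (size w), q) \/
  bedge s (minn t (size w), p) (minn t' (size w), q).
Proof.
move=> Hs Hn ht ht'; rewrite /bedge size_rcons.
case/or4P.
- case/andP=> /andP[/eqP-> /eqP->] /eqP->; right.
  by rewrite (minn_idPr (leqnSn _)) (minn_idPl (leq0n _)) !eqxx.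
- case/and4P=> Ht /eqP-> /eqP-> Hc.
  case: (ltngtP t (size w)) => [tn|tn|->]; [| by exfalso; lia|]; last by left; rewrite (minn_idPr (leqnSn _)).
  right; rewrite ?(minn_idPl (ltnW tn)) (minn_idPl tn) tn !eqxx /=.
  by rewrite letter_rc // (vert_rc Hs) // in Hc; rewrite Hc orbT.
- case/and5P=> Ht /eqP-> /eqP-> /eqP-> Hv.
  case: (ltngtP t (size w)) => [tn|tn|tn]; [| by exfalso; lia|]; last by rewrite tn (vert_rcn Hn) in Hv.
  right; rewrite ?(minn_idPl (ltnW tn)) tn !eqxx /=.
  by rewrite letter_rc // -(vert_rc Hs) // Hv !eqxx /= !orbT.
- case/andP=> H0 /and5P[Ht /eqP-> /eqP-> /eqP-> Hv].
  case: (ltngtP t.-1 (size w)) => [tn|tn|tn]; [| by exfalso; lia|]; last by rewrite tn (vert_rcn Hn) in Hv.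
  have tn' : (t <= size w)%N by rewrite -(prednK H0).
  right; rewrite (minn_idPl tn') H0 tn !eqxx /=.
  by rewrite letter_rc // -(vert_rc Hs tn) Hv !eqxx /= !orbT.
Qed.

Lemma bedge_up w l (s : state w) (s' : state (rcons w l)) t p t' q :
  (forall t, (t < size w)%N -> st s' t = st s t) ->
  (t <= size w)%N -> (t' <= size w)%N -> bedge s (t, p) (t', q) ->
  bedge s' (t, p) (t', q) \/ [/\ t = size w, t' = 0%N & p = q].
Proof.
move=> Hs ht ht'; rewrite /bedge size_rcons.
case/or4P.
- by case/andP=> /andP[/eqP-> /eqP->] /eqP->; right.
- case/and4P=> Ht /eqP-> /eqP-> Hc; left.
  have Ht1 : (t < (size w).+1)%N by lia.
  by rewrite letter_rc // (vert_rc Hs) // Hc Ht1 !eqxx /= orbT.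
- case/and5P=> Ht /eqP-> /eqP-> /eqP-> Hv; left.
  have Ht1 : (t < (size w).+1)%N by lia.
  by rewrite letter_rc // (vert_rc Hs) // Hv Ht1 !eqxx /= !orbT.
- case/andP=> H0 /and5P[Ht /eqP-> /eqP-> /eqP-> Hv]; left.
  have Ht1 : (t.-1 < (size w).+1)%N by lia.
  by rewrite [letter (rcons w l) t.-1]letter_rc // (vert_rc Hs Ht) Hv Ht1 H0 !eqxx /= !orbT.
Qed.

Lemma nval_inj b w : injective (@nval b w).
Proof.
by move=> [t p] [t' q] [/val_inj -> /val_inj ->].
Qed.

Lemma lvl_le b w l (u : node b (rcons w l)) : (u.1 <= (size w).+1)%N.
Proof. by rewrite -ltnS -(size_rcons w l) ltn_ord. Qed.

Lemma edge_dn b w l (s : state w) (s' : state (rcons w l)) u v :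
  (forall t, (t < size w)%N -> st s' t = st s t) ->
  st s' (size w) = ~~ l.2 ->
  @edge b _ s' u v -> connect (@edge b _ s) (dn u) (dn v).
Proof.
move=> Hs Hn.
have key : forall u v : node b (rcons w l),
    bedge s' (nval u) (nval v) -> connect (@edge b _ s) (dn u) (dn v).
  move=> u1 v1; rewrite /nval => /(bedge_dn Hs Hn (lvl_le u1) (lvl_le v1)).
  case=> [E | E].
    by rewrite (nval_inj (_ : nval (dn u1) = nval (dn v1))) ?connect0 // !nval_dn.
  by apply: connect1; rewrite /edge !nval_dn E.
case/orP; first exact: key.
by move/key; rewrite (sym_connect_sym (@edge_sym b w s)).
Qed.

Lemma edge_up b w l (s : state w) (s' : state (rcons w l)) u v :
  (forall t, (t < size w)%N -> st s' t = st s t) ->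
  st s' (size w) = ~~ l.2 ->
  @edge b _ s u v -> connect (@edge b _ s') (up l u) (up l v).
Proof.
move=> Hs Hn.
have key : forall u v : node b w,
    bedge s (nval u) (nval v) -> connect (@edge b _ s') (up l u) (up l v).
  move=> [t p] [t' q]; rewrite /nval /=.
  move=> /(bedge_up Hs (ltn_ord t) (ltn_ord t')) [E | [E1 E2 E3]].
    by apply: connect1; rewrite /edge !nval_up; apply/orP; left; exact: E.
  pose m : node b (rcons w l) := (inord (size w).+1, p).
  have nm : nval m = ((size w).+1, p : nat).
    by rewrite /nval /= inordK // size_rcons.
  apply: (@connect_trans _ _ m); apply: connect1; rewrite /edge nm !nval_up /nval /=.
    by rewrite E1 /bedge size_rcons ltnSn (vert_rcn Hn) !eqxx /= !orbT.
  by rewrite E2 E3 /bedge size_rcons !eqxx.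
case/orP; first exact: key.
by move/key; rewrite (sym_connect_sym (@edge_sym b _ s')).
Qed.

Lemma sc_dn b w l (s : state w) (s' : state (rcons w l)) u v :
  (forall t, (t < size w)%N -> st s' t = st s t) ->
  st s' (size w) = ~~ l.2 ->
  @same_circle b _ s' u v -> same_circle s (dn u) (dn v).
Proof. by move=> Hs Hn; apply: connect_map => x y; apply: edge_dn. Qed.

Lemma sc_up b w l (s : state w) (s' : state (rcons w l)) u v :
  (forall t, (t < size w)%N -> st s' t = st s t) ->
  st s' (size w) = ~~ l.2 ->
  @same_circle b _ s u v -> same_circle s' (up l u) (up l v).
Proof. by move=> Hs Hn; apply: connect_map => x y; apply: edge_up. Qed.

Lemma sc_up_dn b w l (s' : state (rcons w l)) u :
  st s' (size w) = ~~ l.2 ->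
  @same_circle b _ s' (up l (dn u)) u.
Proof.
move=> Hn; have := lvl_le u; rewrite leq_eqVlt ltnS => /orP [/eqP E | le].
  apply: connect1; rewrite /edge nval_up nval_dn E /nval /= E.
  rewrite (minn_idPr (leqnSn _)) /bedge (_ : size w < size (rcons w l))%N ?size_rcons // (vert_rcn Hn) !eqxx /=.
  by rewrite !orbT.
by rewrite up_dn //; apply: connect0.
Qed.

Lemma sc_dnE b w l (s : state w) (s' : state (rcons w l)) u v :
  (forall t, (t < size w)%N -> st s' t = st s t) ->
  st s' (size w) = ~~ l.2 ->
  same_circle s (dn u) (dn v) = @same_circle b _ s' u v.
Proof.
move=> Hs Hn; apply/idP/idP; last exact: sc_dn.
move/(sc_up Hs Hn) => h.
have h1 : same_circle s' u (up l (dn u)) by rewrite sc_sym; exact: sc_up_dn.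
have h2 : same_circle s' (up l (dn v)) v by exact: sc_up_dn.
exact: connect_trans (connect_trans h1 h) h2.
Qed.

Lemma sc_upE b w l (s : state w) (s' : state (rcons w l)) u v :
  (forall t, (t < size w)%N -> st s' t = st s t) ->
  st s' (size w) = ~~ l.2 ->
  same_circle s' (up l u) (up l v) = @same_circle b _ s u v.
Proof. by move=> Hs Hn; rewrite -(sc_dnE _ _ Hs Hn) !dn_up. Qed.

Definition ext w l (s : state w) : state (rcons w l) :=
  [ffun c : 'I_(size (rcons w l)) => if (val c < size w)%N then st s (val c) else ~~ l.2].
Definition restr w l (s' : state (rcons w l)) : state w := [ffun c : 'I_(size w) => st s' (val c)].
Definition lift b w l (x : gen b w) : gen b (rcons w l) :=
  (ext l x.1, [ffun z => x.2 (dn z)]).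
Definition proj b w l (x : gen b (rcons w l)) : gen b w :=
  (restr x.1, [ffun z => x.2 (up l z)]).

Lemma st_ext w l (s : state w) t :
  st (ext l s) t = if (t < size w)%N then st s t else if t == size w then ~~ l.2 else false.
Proof.
case: (ltnP t (size (rcons w l))) => h.
  rewrite /st insubT /= ffunE /=.
  rewrite size_rcons ltnS leq_eqVlt in h.
  case: ltnP => h2; first by [].
  by rewrite (_ : t == size w) //; case/orP: h => // h3; move: h2; rewrite leqNgt h3.
rewrite st_out //; rewrite size_rcons in h.
by rewrite ltnNge ltnW //= gtn_eqF.
Qed.

Lemma Hs_ext w l (s : state w) : forall t, (t < size w)%N -> st (ext l s) t = st s t.
Proof. by move=> t h; rewrite st_ext h. Qed.

Lemma Hn_ext w l (s : state w) : st (ext l s) (size w) = ~~ l.2.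
Proof. by rewrite st_ext ltnn eqxx. Qed.

Lemma st_restr w l (s' : state (rcons w l)) t :
  st (restr s') t = if (t < size w)%N then st s' t else false.
Proof.
case: ltnP => h; first by rewrite /st insubT /= ffunE.
by rewrite st_out.
Qed.

Lemma Hs_restr w l (s' : state (rcons w l)) : forall t, (t < size w)%N -> st s' t = st (restr s') t.
Proof. by move=> t h; rewrite st_restr h. Qed.

Lemma restr_ext w l (s : state w) : restr (ext l s) = s.
Proof. by apply/ffunP => c; rewrite ffunE st_ext ltn_ord stE. Qed.

Lemma ext_restr w l (s' : state (rcons w l)) :
  st s' (size w) = ~~ l.2 -> ext l (restr s') = s'.
Proof.
move=> Hn; apply/ffunP => c; rewrite ffunE st_restr -(stE s' c).
have hc : (val c <= size w)%N by rewrite -ltnS -(size_rcons w l) ltn_ord.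
case: ltnP => h //; rewrite -Hn; f_equal; apply/eqP; by rewrite eqn_leq h hc.
Qed.

Lemma forall_dn b w l (P : pred (node b w)) :
  [forall u : node b (rcons w l), P (dn u)] = [forall u, P u].
Proof.
apply/forallP/forallP => h u; last exact: h.
by have := h (up l u); rewrite dn_up.
Qed.

Lemma valid_lift b w l (x : gen b w) : valid (lift l x) = valid x.
Proof.
rewrite /valid /lift /=.
have Hs := @Hs_ext w l x.1; have Hn := @Hn_ext w l x.1.
transitivity [forall u : node b (rcons w l), forall v : node b (rcons w l),
   same_circle x.1 (dn u) (dn v) ==> (x.2 (dn u) == x.2 (dn v))].
  apply/forallP/forallP => h u; apply/forallP => v; have := forallP (h u) v;
  by rewrite (sc_dnE _ _ Hs Hn) !ffunE.
rewrite -(forall_dn l (fun u => [forall v, same_circle x.1 u v ==> (x.2 u == x.2 v)])).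
apply/forallP/forallP => h u; move: (h u) => /= h'.
  by rewrite -(forall_dn l (fun v => same_circle x.1 (dn u) v ==> (x.2 (dn u) == x.2 v))).
by move: h'; rewrite -(forall_dn l (fun v => same_circle x.1 (dn u) v ==> (x.2 (dn u) == x.2 v))).
Qed.

Lemma proj_lift b w l (x : gen b w) : proj (lift l x) = x.
Proof.
case: x => s f; rewrite /proj /lift /= restr_ext; congr (_, _).
by apply/ffunP => z; rewrite !ffunE dn_up.
Qed.

Lemma lift_proj b w l (x : gen b (rcons w l)) :
  valid x -> st x.1 (size w) = ~~ l.2 -> lift l (proj x) = x.
Proof.
case: x => s f /= V Hn; rewrite /proj /lift /= ext_restr //; congr (_, _).
apply/ffunP => z; rewrite !ffunE.
have := forallP (forallP V (up l (dn z))) z.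
by rewrite /= (sc_up_dn _ Hn) => /eqP.
Qed.

Lemma lift_inj b w l : injective (@lift b w l).
Proof. by move=> x y E; rewrite -(proj_lift l x) E proj_lift. Qed.

Lemma in_circ_lift b w l (s : state w) (s' : state (rcons w l)) (A : nat * nat) z :
  (forall t, (t < size w)%N -> st s' t = st s t) ->
  st s' (size w) = ~~ l.2 -> (A.1 <= size w)%N ->
  in_circ s' (fun u => nval u == A) z = @in_circ b _ s (fun u => nval u == A) (dn z).
Proof.
move=> Hs Hn HA; rewrite /in_circ; apply/existsP/existsP => [[u /andP[/eqP hu h]] | [u /andP[/eqP hu h]]].
  exists (dn u); rewrite (sc_dnE _ _ Hs Hn) h andbT nval_dn -hu.
  by rewrite /nval (minn_idPl _) // -[u.1 : nat]/((nval u).1) hu.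
exists (up l u); rewrite nval_up hu eqxx /=.
by rewrite -(sc_dnE _ _ Hs Hn) dn_up.
Qed.

Lemma lab_lift b w l (f : {ffun node b w -> bool}) (A : nat * nat) :
  (A.1 <= size w)%N ->
  lab [ffun z : node b (rcons w l) => f (dn z)] (fun u => nval u == A) =
  lab f (fun u => nval u == A).
Proof.
move=> HA; rewrite /lab; apply/existsP/existsP => [[u /andP[/eqP hu h]] | [u /andP[/eqP hu h]]].
  exists (dn u); rewrite ffunE in h; rewrite h andbT nval_dn -hu.
  by rewrite /nval (minn_idPl _) // -[u.1 : nat]/((nval u).1) hu.
by exists (up l u); rewrite nval_up hu eqxx /= ffunE dn_up.
Qed.

Lemma card_st w (s : state w) :
  #|[set c | s c]| = count (st s) (iota 0 (size w)).
Proof.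
rewrite -val_enum_ord count_map cardsE cardE /enum_mem size_filter.
rewrite (@eq_filter _ _ predT) // filter_predT; apply: eq_count => c /=; by rewrite stE.
Qed.

Lemma rdeg_lift b w l (x : gen b w) : rdeg (lift l x) = (rdeg x + ~~ l.2)%N.
Proof.
rewrite /rdeg /lift /= !card_st.
rewrite (_ : iota 0 (size (rcons w l)) = iota 0 (size w) ++ [:: size w]); last first.
  by rewrite size_rcons -addn1 iotaD.
rewrite count_cat /=.
rewrite Hn_ext addn0; congr (_ + _)%N.
apply: eq_in_count => t; rewrite mem_iota add0n => /andP[_ h].
by rewrite Hs_ext.
Qed.

Lemma nneg_rc w l : nneg (rcons w l) = (nneg w + ~~ l.2)%N.
Proof. by rewrite /nneg -cats1 count_cat /= addn0. Qed.

Lemma or_state_rc w l : or_state (rcons w l) = ext l (or_state w).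
Proof.
apply/ffunP => c; rewrite !ffunE.
case: ltnP => h.
  by rewrite /st insubT /= ffunE letter_rc.
have hc : (val c <= size w)%N by rewrite -ltnS -(size_rcons w l) ltn_ord.
by rewrite (_ : val c = size w) ?letter_rcn //; apply/eqP; rewrite eqn_leq h hc.
Qed.

Lemma psi_gen_rc b w l : psi_gen b (rcons w l) = lift l (psi_gen b w).
Proof.
rewrite /psi_gen /lift /= or_state_rc; congr (_, _).
by apply/ffunP => z; rewrite !ffunE.
Qed.

Lemma psi'_gen_rc b w l p : psi'_gen b (rcons w l) p = lift l (psi'_gen b w p).
Proof.
rewrite /psi'_gen /lift /= or_state_rc; congr (_, _).
apply/ffunP => z; rewrite !ffunE /marked.
by rewrite (in_circ_lift (s := or_state w) (A := (0%N, p)) z (@Hs_ext w l _) (Hn_ext _ _)).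
Qed.

Lemma lab_marked_lift b w l (x : gen b w) p :
  lab (lift l x).2 (@marked b _ p) = lab x.2 (@marked b w p).
Proof. by rewrite /marked /lift /= (lab_lift l x.2 (A := (0%N, p))). Qed.

Lemma conn_lift b w l (s : state w) (s' : state (rcons w l)) (A B : nat * nat) :
  (forall t, (t < size w)%N -> st s' t = st s t) ->
  st s' (size w) = ~~ l.2 -> (A.1 <= size w)%N -> (B.1 <= size w)%N ->
  [exists u : node b (rcons w l), exists v : node b (rcons w l),
     [&& nval u == A, nval v == B & same_circle s' u v]] =
  [exists u : node b w, exists v : node b w,
     [&& nval u == A, nval v == B & same_circle s u v]].
Proof.
move=> Hs Hn HA HB.
have dnv : forall u : node b (rcons w l), forall C : nat * nat, (C.1 <= size w)%N ->
    nval u = C -> nval (dn u) = C.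
  move=> u C HC hu; rewrite nval_dn -hu.
  by rewrite /nval (minn_idPl _) // -[u.1 : nat]/((nval u).1) hu.
apply/existsP/existsP => [[u /existsP[v /and3P[/eqP hu /eqP hv h]]] | [u /existsP[v /and3P[/eqP hu /eqP hv h]]]].
  exists (dn u); apply/existsP; exists (dn v).
  by rewrite (dnv _ _ HA hu) (dnv _ _ HB hv) (sc_dnE _ _ Hs Hn) h !eqxx.
exists (up l u); apply/existsP; exists (up l v).
by rewrite !nval_up hu hv -(sc_dnE _ _ Hs Hn) !dn_up h !eqxx.
Qed.

Lemma local_coef_lift b w l c (x y : gen b w) : (c < size w)%N ->
  local_coef c (lift l x) (lift l y) = local_coef c x y.
Proof.
move=> hc; rewrite /local_coef /arcU /arcV !letter_rc //.
set A := (c, (letter w c).1.-1); set B := (c.+1, (letter w c).1).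
have HA : (A.1 <= size w)%N by rewrite /= ltnW.
have HB : (B.1 <= size w)%N by [].
rewrite /lift /=.
rewrite (@conn_lift b w l x.1 (ext l x.1) A B (@Hs_ext w l _) (Hn_ext _ _) HA HB).
rewrite (@conn_lift b w l y.1 (ext l y.1) A B (@Hs_ext w l _) (Hn_ext _ _) HA HB).
rewrite !(lab_lift l _ HA) !(lab_lift l _ HB).
have IC := fun A' z (H : (A'.1 <= size w)%N) =>
  @in_circ_lift b w l x.1 (ext l x.1) A' z (@Hs_ext w l _) (Hn_ext _ _) H.
congr (if _ then _ && _ else if _ then _ && _ else _);
 (apply/forallP/forallP => h z;
  [ have := h (up l z); rewrite !ffunE dn_up !IC // dn_up
  | have := h (dn z); rewrite !ffunE !IC // ]).
all: exact: id.
Qed.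

Lemma card_nat (w : braid_word) (P : pred nat) :
  #|[set j : 'I_(size w) | P j]| = count P (iota 0 (size w)).
Proof.
rewrite -val_enum_ord count_map cardsE cardE /enum_mem size_filter.
rewrite (@eq_filter _ _ predT) // filter_predT; apply: eq_count => c /=.
by [].
Qed.

Definition flipb w (s s' : state w) (c : nat) : bool :=
  [forall j : 'I_(size w), st s' j == (val j == c) || st s j].

Lemma flipP w (s s' : state w) c :
  reflect (forall t, (t < size w)%N -> st s' t = (t == c) || st s t) (flipb s s' c).
Proof.
apply: (iffP forallP) => h.
  by move=> t ht; have /eqP := h (Ordinal ht).
by move=> j; rewrite h.
Qed.

Definition Gt b w (x y : gen b w) (c : nat) : int :=
  if ~~ st x.1 c && flipb x.1 y.1 c then
    ((-1) ^+ count (st x.1) (iota 0 c) * (local_coef c x y)%:Z)%R else 0%R.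

Lemma kh_d_nat b w (x y : gen b w) :
  kh_d x y = if valid x && valid y then (\sum_(0 <= c < size w) Gt x y c)%R else 0%R.
Proof.
rewrite /kh_d; case: (valid x && valid y) => //.
rewrite big_mkcond big_mkord; apply: eq_bigr => c _.
rewrite /Gt stE.
have -> : (y.1 == [ffun j => if j == c then true else x.1 j]) = flipb x.1 y.1 c.
  apply/eqP/flipP => [-> t ht | h].
    rewrite (_ : t = Ordinal ht) // !stE ffunE.
    by case: ifP => E; rewrite /= -[Ordinal ht == c]/(t == c) in E; rewrite E.
  apply/ffunP => j; rewrite ffunE -(stE y.1 j) h // stE.
  by case: ifP => E; rewrite -[j == c]/((j:nat) == c) in E; rewrite E.
congr (if _ then (_ * _)%R else _); congr (_ ^+ _)%R.
rewrite (@eq_card _ _ [set j : 'I_(size w) | (fun t => (t < c)%N && st x.1 t) (val j)]);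
  last by move=> j; rewrite !inE stE.
rewrite (card_nat w (fun t => (t < c)%N && st x.1 t)).
rewrite (_ : iota 0 (size w) = iota 0 c ++ iota c (size w - c)); last by rewrite -iotaD subnKC // ltnW.
rewrite count_cat.
rewrite (@eq_in_count _ (fun t => (t < c)%N && st x.1 t) (st x.1) (iota 0 c)); last first.
  by move=> t; rewrite mem_iota add0n => /andP[_ ->].
rewrite (@eq_in_count _ (fun t => (t < c)%N && st x.1 t) pred0 (iota c _)); last first.
  by move=> t; rewrite mem_iota => /andP[h _] /=; rewrite ltnNge h.
by rewrite count_pred0 addn0.
Qed.


Lemma sum_nat_eq (m n : nat) (F : nat -> int) : m = n ->
  (\sum_(0 <= c < m) F c)%R = (\sum_(0 <= c < n) F c)%R.
Proof. by move->. Qed.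

Lemma kh_d_lift b w l (x y : gen b w) : kh_d (lift l x) (lift l y) = kh_d x y.
Proof.
rewrite !kh_d_nat !valid_lift; case: (valid x && valid y) => //.
rewrite (sum_nat_eq _ (size_rcons w l)) big_nat_recr //=.
rewrite {2}/Gt /lift /= Hn_ext.
have -> : ~~ ~~ l.2 && flipb (ext l x.1) (ext l y.1) (size w) = false.
  apply/negbTE/negP => /andP[h1 /flipP h2].
  have := h2 (size w); rewrite size_rcons ltnSn eqxx Hn_ext => /(_ isT).
  by move: h1; case: (l.2).
rewrite GRing.addr0; apply: eq_big_nat => c /andP[_ hc].
rewrite /Gt -/(lift l x) -/(lift l y) local_coef_lift //= Hs_ext //.
have -> : flipb (ext l x.1) (ext l y.1) c = flipb x.1 y.1 c.
  apply/flipP/flipP => h t ht.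
    by have := h t; rewrite size_rcons ltnS (ltnW ht) !Hs_ext // => ->.
  move: ht; rewrite size_rcons ltnS leq_eqVlt => /orP[/eqP -> | ht].
    by rewrite !Hn_ext gtn_eqF.
  by rewrite !Hs_ext // h.
congr (if _ then (_ ^+ _ * _)%R else _).
apply: eq_in_count => t; rewrite mem_iota add0n => /andP[_ ht].
by rewrite Hs_ext // (ltn_trans ht hc).
Qed.

Lemma kh_d_nz b w (x y : gen b w) : kh_d x y != 0%R ->
  [/\ valid x, valid y & forall t, st x.1 t -> st y.1 t].
Proof.
rewrite kh_d_nat; case: ifP => [/andP[vx vy] H|]; last by rewrite eqxx.
split=> // t ht.
case: (boolP [exists c : 'I_(size w), Gt x y c != 0%R]) => [/existsP[c hc] | /existsPn h].
  move: hc; rewrite /Gt; case: ifP; last by rewrite eqxx.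
  case/andP=> _ /flipP hf _.
  case: (ltnP t (size w)) => htw; first by rewrite hf // ht orbT.
  by rewrite st_out in ht.
move: H; rewrite big_nat big1 ?eqxx // => c /andP[_ hc].
by have := h (Ordinal hc); rewrite negbK => /eqP.
Qed.

Lemma sum_lift b w l (R : zmodType) (F : gen b (rcons w l) -> R) :
  (forall x', F x' != 0%R -> lift l (proj x') = x') ->
  (\sum_x' F x' = \sum_x F (lift l x))%R.
Proof.
move=> H; rewrite (bigID (fun x' => lift l (proj x') == x')) /=.
rewrite [X in (_ + X)%R]big1 ?GRing.addr0; last first.
  move=> x' ne; case: (F x' =P 0%R) => // /eqP /H E.
  by rewrite E eqxx in ne.
rewrite (reindex_onto (lift l) (@proj b w l)) => [|x' /eqP //].
by apply: eq_bigl => x; rewrite !proj_lift !eqxx.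
Qed.

Local Open Scope ring_scope.

Lemma step_pos b w l : l.2 = true ->
  psi_vanishes b (rcons w l) -> psi_vanishes b w.
Proof.
move=> Hl [cf [Hsupp Hsum]].
exists [ffun x => cf (lift l x)]; split.
  move=> x; rewrite ffunE => /Hsupp.
  by rewrite valid_lift rdeg_lift nneg_rc Hl /= !addn0.
move=> y; have := Hsum (lift l y).
rewrite psi_gen_rc (inj_eq (@lift_inj b w l)) => <-.
rewrite (sum_lift (F := fun x' => cf x' * kh_d x' (lift l y))).
  by apply: eq_bigr => x _; rewrite ffunE kh_d_lift.
move=> x' H.
have h1 : cf x' != 0 by apply: contraNneq H => ->; rewrite mul0r.
have h2 : kh_d x' (lift l y) != 0 by apply: contraNneq H => ->; rewrite mulr0.
case/andP: (Hsupp _ h1) => vx _.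
case: (kh_d_nz h2) => _ _ hst; apply: lift_proj => //.
have := hst (size w); rewrite /lift /= Hn_ext Hl /=.
by case: (st x'.1 (size w)) => // /(_ isT).
Qed.

Lemma step_neg b w l : l.2 = false ->
  psi_vanishes b w -> psi_vanishes b (rcons w l).
Proof.
move=> Hl [cf [Hsupp Hsum]].
exists [ffun x' => if lift l (proj x') == x' then cf (proj x') else 0]; split.
  move=> x'; rewrite ffunE; case: (lift l (proj x') =P x') => [E|_]; last by rewrite eqxx.
  move=> /Hsupp h; rewrite -E valid_lift rdeg_lift nneg_rc Hl /= !addn1.
  by rewrite eqSS.
move=> y'.
rewrite (sum_lift (F := fun x' => _ * kh_d x' y')); last first.
  move=> x' H; have : [ffun x' => if lift l (proj x') == x' then cf (proj x') else 0] x' != 0.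
    by apply: contraNneq H => ->; rewrite mul0r.
  by rewrite ffunE; case: (lift l (proj x') =P x').
under eq_bigr => x _ do rewrite ffunE proj_lift eqxx.
case: (boolP (lift l (proj y') == y')) => [/eqP E | ne].
  rewrite -E psi_gen_rc (inj_eq (@lift_inj b w l)) -Hsum.
  by apply: eq_bigr => x _; rewrite kh_d_lift.
have -> : (y' == psi_gen b (rcons w l)) = false.
  apply/negbTE; apply: contraNneq ne => ->.
  by rewrite psi_gen_rc proj_lift.
rewrite big1 // => x _.
case: (kh_d (lift l x) y' =P 0) => [-> | /eqP H]; first by rewrite mulr0.
case: (kh_d_nz H) => _ vy hst.
have := hst (size w); rewrite /lift /= Hn_ext Hl => /(_ isT) hy.
by move: ne; rewrite lift_proj ?eqxx // hy Hl.
Qed.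

Lemma intr_nz (z : int) : (z%:~R : 'F_2) != 0 -> z != 0.
Proof. by apply: contraNneq => ->. Qed.

Lemma step_pos' b w l p : l.2 = true ->
  psi'_vanishes b (rcons w l) p -> psi'_vanishes b w p.
Proof.
move=> Hl [cf [Hsupp Hsum]].
exists [ffun x => cf (lift l x)]; split.
  move=> x; rewrite ffunE => /Hsupp.
  by rewrite valid_lift rdeg_lift nneg_rc Hl /= !addn0 lab_marked_lift.
move=> y vy ly; have := Hsum (lift l y); rewrite valid_lift lab_marked_lift => /(_ vy ly).
rewrite psi'_gen_rc (inj_eq (@lift_inj b w l)) => <-.
rewrite (sum_lift (F := fun x' => cf x' * (kh_d x' (lift l y))%:~R)).
  by apply: eq_bigr => x _; rewrite ffunE kh_d_lift.
move=> x' H.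
have h1 : cf x' != 0 by apply: contraNneq H => ->; rewrite mul0r.
have h2 : kh_d x' (lift l y) != 0.
  by apply: intr_nz; apply: contraNneq H => ->; rewrite mulr0.
case/and3P: (Hsupp _ h1) => vx _ _.
case: (kh_d_nz h2) => _ _ hst; apply: lift_proj => //.
have := hst (size w); rewrite /lift /= Hn_ext Hl /=.
by case: (st x'.1 (size w)) => // /(_ isT).
Qed.

Lemma step_neg' b w l p : l.2 = false ->
  psi'_vanishes b w p -> psi'_vanishes b (rcons w l) p.
Proof.
move=> Hl [cf [Hsupp Hsum]].
exists [ffun x' => if lift l (proj x') == x' then cf (proj x') else 0]; split.
  move=> x'; rewrite ffunE; case: (lift l (proj x') =P x') => [E|_]; last by rewrite eqxx.
  move=> /Hsupp h; rewrite -E valid_lift rdeg_lift lab_marked_lift nneg_rc Hl /= !addn1.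
  by rewrite eqSS.
move=> y' vy ly.
rewrite (sum_lift (F := fun x' => _ * (kh_d x' y')%:~R)); last first.
  move=> x' H; have : [ffun x' => if lift l (proj x') == x' then cf (proj x') else 0] x' != 0.
    by apply: contraNneq H => ->; rewrite mul0r.
  by rewrite ffunE; case: (lift l (proj x') =P x').
under eq_bigr => x _ do rewrite ffunE proj_lift eqxx.
case: (boolP (lift l (proj y') == y')) => [/eqP E | ne].
  move: vy ly; rewrite -E psi'_gen_rc (inj_eq (@lift_inj b w l)) valid_lift lab_marked_lift.
  move=> vy ly; rewrite -(Hsum _ vy ly).
  by apply: eq_bigr => x _; rewrite kh_d_lift.
have -> : (y' == psi'_gen b (rcons w l) p) = false.
  apply/negbTE; apply: contraNneq ne => ->.
  by rewrite psi'_gen_rc proj_lift.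
rewrite big1 // => x _.
case: (kh_d (lift l x) y' =P 0) => [-> | /eqP H]; first by rewrite mulr0.
case: (kh_d_nz H) => _ vy' hst.
have := hst (size w); rewrite /lift /= Hn_ext Hl => /(_ isT) hy.
by move: ne; rewrite lift_proj ?eqxx // hy Hl.
Qed.

Lemma cat_pos b w s : all (fun l => l.2 == true) s ->
  (psi_vanishes b (w ++ s) -> psi_vanishes b w) /\
  (forall p, psi'_vanishes b (w ++ s) p -> psi'_vanishes b w p).
Proof.
elim/last_ind: s => [|s l IH]; first by rewrite cats0.
rewrite all_rcons => /andP[/eqP hl /IH [IH1 IH2]]; rewrite -rcons_cat; split.
  by move/(step_pos hl).
by move=> p /(step_pos' hl) /IH2.
Qed.

Lemma cat_neg b w s : all (fun l => l.2 == false) s ->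
  (psi_vanishes b w -> psi_vanishes b (w ++ s)) /\
  (forall p, psi'_vanishes b w p -> psi'_vanishes b (w ++ s) p).
Proof.
elim/last_ind: s => [|s l IH]; first by rewrite cats0.
rewrite all_rcons => /andP[/eqP hl /IH [IH1 IH2]]; rewrite -rcons_cat; split.
  by move/IH1/(step_neg hl).
by move=> p /IH2 /(step_neg' hl).
Qed.

Lemma ft_all a i e : all (fun l => l.2 == e) (full_twist a i e).
Proof.
apply/allP => x /flattenP [s /nseqP [-> _]] /mapP [j _ ->] /=.
by rewrite eqxx.
Qed.

Lemma twistedS beta a i e m :
  twisted beta a i e m.+1 = twisted beta a i e m ++ full_twist a i e.
Proof.
rewrite /twisted -catA -flatten_rcons; congr (_ ++ flatten _).
by elim: m => //= m ->.
Qed.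

From Stdlib Require Import Classical_Prop.

Lemma ev_anti (P : nat -> Prop) : (forall m, P m.+1 -> P m) ->
  exists N, forall m, (N < m)%N -> (P m <-> P m.+1).
Proof.
move=> H; case: (classic (exists m0, ~ P m0)) => [[m0 h] | h].
  exists m0 => m hm.
  have nP : forall k, (m0 <= k)%N -> ~ P k.
    move=> k /subnKC <-; elim: (k - m0)%N => [|d IHd]; first by rewrite addn0.
    by rewrite addnS => /H.
  by split => [h1|]; [exfalso; exact: (nP m (ltnW hm)) | exact: H].
exists 0%N => m _; split=> _; apply: NNPP => hn; apply: h; by eexists; exact: hn.
Qed.

Lemma ev_mono (P : nat -> Prop) : (forall m, P m -> P m.+1) ->
  exists N, forall m, (N < m)%N -> (P m <-> P m.+1).
Proof.
move=> H; have [N HN] := ev_anti (P := fun m => ~ P m) (fun m h hm => h (H m hm)).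
exists N => m /HN [h1 h2]; split; first exact: H.
by move=> hm1; apply: NNPP => hm; exact: h1 hm hm1.
Qed.

Lemma ev_fin (Q : nat -> nat -> Prop) bound :
  (forall p, (p < bound)%N -> exists N, forall m, (N < m)%N -> Q p m) ->
  exists N, forall p, (p < bound)%N -> forall m, (N < m)%N -> Q p m.
Proof.
elim: bound => [|k IH] H; first by exists 0%N.
have [N1 H1] := IH (fun p hp => H p (ltnW hp)).
have [N2 H2] := H k (ltnSn k).
exists (maxn N1 N2) => p; rewrite ltnS leq_eqVlt => /orP [/eqP -> | hp] m hm.
  by apply: H2; apply: leq_ltn_trans hm; apply: leq_maxr.
by apply: H1 => //; apply: leq_ltn_trans hm; apply: leq_maxl.
Qed.

Local Close Scope ring_scope.

Theorem theorem1p5 (b a i : nat) (beta : braid_word) (e : bool) :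
  (2 <= a)%N -> (a < b)%N -> (1 <= i)%N -> (i <= b - a + 1)%N ->
  wf_word b beta ->
  exists N : nat, forall m : nat, (N < m)%N ->
    (psi_vanishes b (twisted beta a i e m) <->
     psi_vanishes b (twisted beta a i e m.+1)) /\
    (forall p : nat, (p < b)%N ->
      (psi'_vanishes b (twisted beta a i e m) p <->
       psi'_vanishes b (twisted beta a i e m.+1) p)).
Proof.
move=> _ _ _ _ _.
have [N1 H1] : exists N, forall m, (N < m)%N ->
    (psi_vanishes b (twisted beta a i e m) <-> psi_vanishes b (twisted beta a i e m.+1)).
  case: e.
    by apply: ev_anti => m; rewrite twistedS; exact: (@cat_pos b (twisted beta a i true m) _ (ft_all a i true)).1.
  by apply: ev_mono => m; rewrite twistedS; exact: (@cat_neg b (twisted beta a i false m) _ (ft_all a i false)).1.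
have [N2 H2] : exists N, forall p, (p < b)%N -> forall m, (N < m)%N ->
    (psi'_vanishes b (twisted beta a i e m) p <-> psi'_vanishes b (twisted beta a i e m.+1) p).
  clear H1; apply: ev_fin => p _; case: e.
    by apply: ev_anti => m; rewrite twistedS; exact: (@cat_pos b (twisted beta a i true m) _ (ft_all a i true)).2.
  by apply: ev_mono => m; rewrite twistedS; exact: (@cat_neg b (twisted beta a i false m) _ (ft_all a i false)).2.
exists (maxn N1 N2) => m hm; split.
  by apply: H1; apply: leq_ltn_trans hm; apply: leq_maxl.
by move=> p hp; apply: H2 => //; apply: leq_ltn_trans hm; apply: leq_maxr.
Qed.
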